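(* For any pair of objects $A$ and $B$ in $\mathrm{ob}\,\mathcal{A}$, the map \[ \mathrm{d}_{f_\alpha}(A,B)=\inf\Big\{f_\alpha(\mathbf{c}) \mid \mathbf{c}\colon A\xleftrightarrow{\ \varphi\ } C \xleftrightarrow{\ \psi\ } B \Big\}, \] with the convention $\inf\emptyset=\infty$, defines an (extended) pseudometric on $\mathrm{ob}\,\mathcal{A}$.
   Context: Let $\mathcal{A}$ be an abelian category and $\alpha$ an amplitude on $\mathcal{A}$, i.e. a class function $\alpha\colon \mathrm{ob}\,\mathcal{A}\to[0,\infty]$ with $\alpha(0)=0$ such that for every short exact sequence $0\to A\to B\to C\to 0$ in $\mathcal{A}$ one has $\alpha(A)\le\alpha(B)$, $\alpha(C)\le\alpha(B)$ and $\alpha(B)\le\alpha(A)+\alpha(C)$. Let $f\colon[0,\infty]^4\to[0,\infty]$ be a cost function, i.e. $f$ is monotone, subadditive, $f(0)=0$, and $f(x_1,x_2,x_3,x_4)=f(x_3,x_2,x_1,x_4)=f(x_1,x_4,x_3,x_2)$. For a span or cospan $\mathbf{c}\colon A\xleftrightarrow{\ \varphi\ } C \xleftrightarrow{\ \psi\ } B$ in $\mathcal{A}$ (i.e. either $A\xleftarrow{\varphi}C\xrightarrow{\psi}B$ or $A\xrightarrow{\varphi}C\xleftarrow{\psi}B$), its $f$-cost is $f_\alpha(\mathbf{c})=f(\alpha(\ker\varphi),\alpha(\operatorname{coker}\varphi),\alpha(\ker\psi),\alpha(\operatorname{coker}\psi))$. The infimum is taken over all such spans and cospans between $A$ and $B$.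 *)

(* Defs.v *)
From HB Require Import structures.
From mathcomp Require Import all_boot all_order all_algebra.
From mathcomp Require Import all_classical all_reals.
From mathcomp Require Import ereal.
Set Implicit Arguments. Unset Strict Implicit. Unset Printing Implicit Defensive.
Import Order.TTheory GRing.Theory Num.Theory.
Local Open Scope classical_set_scope.
Local Open Scope ring_scope.

Record category := Category {
  Obj : Type;
  Hom : Obj -> Obj -> zmodType;
  idm : forall A : Obj, Hom A A;
  comp : forall A B C : Obj, Hom B C -> Hom A B -> Hom A C
}.
Arguments idm {c} A.
Arguments comp {c A B C} g f.

Section Abelian.
Variable K : category.
Local Notation Obj := (Obj K).
Local Notation Hom := (@Hom K).

Definition preadditive : Prop :=
  [/\ (forall (A B : Obj) (f : Hom A B), comp (idm B) f = f),
      (forall (A B : Obj) (f : Hom A B), comp f (idm A) = f),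
      (forall (A B C D : Obj) (h : Hom C D) (g : Hom B C) (f : Hom A B),
          comp h (comp g f) = comp (comp h g) f),
      (forall (A B C : Obj) (g g' : Hom B C) (f : Hom A B),
          comp (g + g') f = comp g f + comp g' f) &
      (forall (A B C : Obj) (g : Hom B C) (f f' : Hom A B),
          comp g (f + f') = comp g f + comp g f')].

Definition is_zero_obj (Z : Obj) : Prop :=
  forall X : Obj, (forall f : Hom X Z, f = 0) /\ (forall f : Hom Z X, f = 0).

Definition is_biproduct (A B P : Obj) (i1 : Hom A P) (i2 : Hom B P)
    (p1 : Hom P A) (p2 : Hom P B) : Prop :=
  [/\ comp p1 i1 = idm A, comp p2 i2 = idm B, comp p1 i2 = 0, comp p2 i1 = 0 &
      comp i1 p1 + comp i2 p2 = idm P].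

Definition is_kernel (A B : Obj) (f : Hom A B) (Kr : Obj) (k : Hom Kr A) : Prop :=
  comp f k = 0 /\
  forall (X : Obj) (g : Hom X A), comp f g = 0 -> exists! u : Hom X Kr, comp k u = g.

Definition is_cokernel (A B : Obj) (f : Hom A B) (Q : Obj) (q : Hom B Q) : Prop :=
  comp q f = 0 /\
  forall (X : Obj) (g : Hom B X), comp g f = 0 -> exists! u : Hom Q X, comp u q = g.

Definition mono (A B : Obj) (f : Hom A B) : Prop :=
  forall (X : Obj) (g h : Hom X A), comp f g = comp f h -> g = h.
Definition epi (A B : Obj) (f : Hom A B) : Prop :=
  forall (X : Obj) (g h : Hom B X), comp g f = comp h f -> g = h.

Definition is_abelian : Prop :=
  [/\ preadditive,
      (exists Z : Obj, is_zero_obj Z),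
      (
      (forall A B : Obj, exists (P : Obj) (i1 : Hom A P) (i2 : Hom B P)
          (p1 : Hom P A) (p2 : Hom P B), is_biproduct i1 i2 p1 p2) /\
      (forall (A B : Obj) (f : Hom A B), exists (Kr : Obj) (k : Hom Kr A), is_kernel f k) /\
      (forall (A B : Obj) (f : Hom A B), exists (Q : Obj) (q : Hom B Q), is_cokernel f q)) &
      ((forall (A B : Obj) (f : Hom A B), mono f ->
          exists (C : Obj) (g : Hom B C), is_kernel g f) /\
      (forall (A B : Obj) (f : Hom A B), epi f ->
          exists (C : Obj) (g : Hom C A), is_cokernel g f))].

Definition short_exact (A B C : Obj) (i : Hom A B) (p : Hom B C) : Prop :=
  is_kernel p i /\ is_cokernel i p.

Local Open Scope ereal_scope.
Variable R : realType.

Definition amplitude (alpha : Obj -> \bar R) : Prop :=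
  [/\ (forall A : Obj, 0 <= alpha A),
      (forall Z : Obj, is_zero_obj Z -> alpha Z = 0) &
      (forall (A B C : Obj) (i : Hom A B) (p : Hom B C), short_exact i p ->
         [/\ alpha A <= alpha B, alpha C <= alpha B & alpha B <= alpha A + alpha C])].

(** f-cost of a pair of morphisms (phi, psi): the value
    f(alpha(ker phi), alpha(coker phi), alpha(ker psi), alpha(coker psi)),
    for some choice of kernels and cokernels (independent of the choice,
    as alpha is invariant under isomorphism). *)
Definition has_cost (alpha : Obj -> \bar R)
    (f : \bar R -> \bar R -> \bar R -> \bar R -> \bar R)
    (X1 Y1 X2 Y2 : Obj) (phi : Hom X1 Y1) (psi : Hom X2 Y2) (x : \bar R) : Prop :=
  exists (K1 : Obj) (k1 : Hom K1 X1) (Q1 : Obj) (q1 : Hom Y1 Q1)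
         (K2 : Obj) (k2 : Hom K2 X2) (Q2 : Obj) (q2 : Hom Y2 Q2),
    [/\ is_kernel phi k1, is_cokernel phi q1, is_kernel psi k2, is_cokernel psi q2 &
        x = f (alpha K1) (alpha Q1) (alpha K2) (alpha Q2)].

(** costs of all spans A <- C -> B and cospans A -> C <- B *)
Definition cost_set (alpha : Obj -> \bar R)
    (f : \bar R -> \bar R -> \bar R -> \bar R -> \bar R) (A B : Obj) : set (\bar R) :=
  [set x | exists C : Obj,
     (exists (phi : Hom C A) (psi : Hom C B), has_cost alpha f phi psi x) \/
     (exists (phi : Hom A C) (psi : Hom B C), has_cost alpha f phi psi x)].

(** d_{f_alpha}(A,B); ereal_inf set0 = +oo *)
Definition dist (alpha : Obj -> \bar R)
    (f : \bar R -> \bar R -> \bar R -> \bar R -> \bar R) (A B : Obj) : \bar R :=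
  ereal_inf (cost_set alpha f A B).

Definition ext_pseudometric (d : Obj -> Obj -> \bar R) : Prop :=
  [/\ (forall A B : Obj, 0 <= d A B),
      (forall A : Obj, d A A = 0),
      (forall A B : Obj, d A B = d B A) &
      (forall A B C : Obj, d A C <= d A B + d B C)].

End Abelian.

Local Open Scope ereal_scope.
(** cost function f : [0,oo]^4 -> [0,oo]; properties required on [0,oo]^4 *)
Definition nonneg4 (R : realType) (x1 x2 x3 x4 : \bar R) : Prop :=
  [/\ 0 <= x1, 0 <= x2, 0 <= x3 & 0 <= x4].

Definition cost_function (R : realType)
    (f : \bar R -> \bar R -> \bar R -> \bar R -> \bar R) : Prop :=
  [/\ (forall x1 x2 x3 x4, nonneg4 x1 x2 x3 x4 -> 0 <= f x1 x2 x3 x4),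
      (forall x1 x2 x3 x4 y1 y2 y3 y4, nonneg4 x1 x2 x3 x4 ->
          x1 <= y1 -> x2 <= y2 -> x3 <= y3 -> x4 <= y4 ->
          f x1 x2 x3 x4 <= f y1 y2 y3 y4),
      (forall x1 x2 x3 x4 y1 y2 y3 y4, nonneg4 x1 x2 x3 x4 -> nonneg4 y1 y2 y3 y4 ->
          f (x1 + y1) (x2 + y2) (x3 + y3) (x4 + y4)
            <= f x1 x2 x3 x4 + f y1 y2 y3 y4),
      f 0 0 0 0 = 0 &
      (forall x1 x2 x3 x4, nonneg4 x1 x2 x3 x4 ->
          f x1 x2 x3 x4 = f x3 x2 x1 x4 /\ f x1 x2 x3 x4 = f x1 x4 x3 x2)].

(* Main.v *)
Require Import Defs.
From mathcomp Require Import all_boot all_order all_algebra.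
From mathcomp Require Import all_classical all_reals.
From mathcomp Require Import ereal.
Set Implicit Arguments. Unset Strict Implicit. Unset Printing Implicit Defensive.
Import Order.TTheory GRing.Theory Num.Theory.
Local Open Scope ring_scope.

Notation HOM K A B := (@Defs.Hom K A B).
Notation "g \oc f" := (Defs.comp g f) (at level 40, left associativity).

Definition opc (K : category) : category :=
  @Category (Obj K) (fun A B => HOM K B A) (fun A => idm A)
    (fun A B C g f => f \oc g).

Lemma preadd_op (K : category) : preadditive K -> preadditive (opc K).
Proof.
case=> h1 h2 h3 h4 h5; split => /=.
- by move=> A B f; apply: h2.
- by move=> A B f; apply: h1.
- by move=> A B C D h g f; rewrite h3.
- by move=> A B C g g' f; apply: h5.
- by move=> A B C g f f'; apply: h4.
Qed.

Lemma abelian_op (K : category) : is_abelian K -> is_abelian (opc K).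
Proof.
case=> hp [Z hZ] [hb [hk hc]] [hm he]; split.
- exact: preadd_op.
- by exists Z => X; case: (hZ X) => a b; split.
- split; last split.
  + move=> A B; case: (hb A B) => P [i1 [i2 [p1 [p2 [e1 e2 e3 e4 e5]]]]].
    by exists P, p1, p2, i1, i2; split.
  + by move=> A B f; case: (hc _ _ f) => Q [q hq]; exists Q, q.
  + by move=> A B f; case: (hk _ _ f) => Q [q hq]; exists Q, q.
- split.
  + by move=> A B f mf; case: (he _ _ f mf) => C [g hg]; exists C, g.
  + by move=> A B f mf; case: (hm _ _ f mf) => C [g hg]; exists C, g.
Qed.

Lemma amp_op (K : category) (R : realType) (alpha : Obj K -> \bar R) :
  amplitude alpha -> @amplitude (opc K) R alpha.
Proof.
case=> h1 h2 h3; split => //.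
- by move=> Z hZ; apply: h2 => X; case: (hZ X) => a b; split.
- move=> A B C i p [hi hp].
  have [a b c] := h3 C B A p i (conj hp hi).
  by split => //; rewrite addeC.
Qed.
Section Basic.
Variable K : category.
Hypothesis hab : is_abelian K.

Let hp : preadditive K. Proof. by case: hab. Qed.

Lemma compA (A B C D : Obj K) (h : HOM K C D) (g : HOM K B C) (f : HOM K A B) :
  h \oc (g \oc f) = h \oc g \oc f.
Proof. by case: hp => _ _ e _ _; apply: e. Qed.
Lemma comp1l (A B : Obj K) (f : HOM K A B) : idm B \oc f = f.
Proof. by case: hp => e _ _ _ _; apply: e. Qed.
Lemma comp1r (A B : Obj K) (f : HOM K A B) : f \oc idm A = f.
Proof. by case: hp => _ e _ _ _; apply: e. Qed.
Lemma compDl (A B C : Obj K) (g g' : HOM K B C) (f : HOM K A B) :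
  (g + g') \oc f = g \oc f + g' \oc f.
Proof. by case: hp => _ _ _ e _; apply: e. Qed.
Lemma compDr (A B C : Obj K) (g : HOM K B C) (f f' : HOM K A B) :
  g \oc (f + f') = g \oc f + g \oc f'.
Proof. by case: hp => _ _ _ _ e; apply: e. Qed.
Lemma comp0l (A B C : Obj K) (f : HOM K A B) : (0 : HOM K B C) \oc f = 0.
Proof.
have := compDl (0 : HOM K B C) 0 f; rewrite addr0 => e.
by apply/(addrI (0 \oc f)); rewrite addr0 -e.
Qed.
Lemma comp0r (A B C : Obj K) (g : HOM K B C) : g \oc (0 : HOM K A B) = 0.
Proof.
have := compDr g (0 : HOM K A B) 0; rewrite addr0 => e.
by apply/(addrI (g \oc 0)); rewrite addr0 -e.
Qed.
Lemma compNl (A B C : Obj K) (g : HOM K B C) (f : HOM K A B) :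
  (- g) \oc f = - (g \oc f).
Proof. by apply/eqP; rewrite -addr_eq0 -compDl addNr comp0l. Qed.
Lemma compNr (A B C : Obj K) (g : HOM K B C) (f : HOM K A B) :
  g \oc (- f) = - (g \oc f).
Proof. by apply/eqP; rewrite -addr_eq0 -compDr addNr comp0r. Qed.
Lemma compBl (A B C : Obj K) (g g' : HOM K B C) (f : HOM K A B) :
  (g - g') \oc f = g \oc f - g' \oc f.
Proof. by rewrite compDl compNl. Qed.
Lemma compBr (A B C : Obj K) (g : HOM K B C) (f f' : HOM K A B) :
  g \oc (f - f') = g \oc f - g \oc f'.
Proof. by rewrite compDr compNr. Qed.

Lemma monoP (A B : Obj K) (m : HOM K A B) :
  mono m <-> (forall X (h : HOM K X A), m \oc h = 0 -> h = 0).
Proof.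
split=> [hm X h e|H X g h e].
  by apply: hm; rewrite e comp0r.
by apply/eqP; rewrite -subr_eq0; apply/eqP/H; rewrite compBr e subrr.
Qed.

Lemma kernel_mono (A B : Obj K) (f : HOM K A B) (Kr : Obj K) (k : HOM K Kr A) :
  is_kernel f k -> mono k.
Proof.
case=> e U X g h ekg.
have e0 : f \oc (k \oc g) = 0 by rewrite compA e comp0l.
have [u [_ hu]] := U X _ e0.
by rewrite -(hu g) // (hu h).
Qed.

Lemma mono_comp (A B C : Obj K) (g : HOM K B C) (f : HOM K A B) :
  mono g -> mono f -> mono (g \oc f).
Proof. by move=> mg mf X a b; rewrite -!compA => /mg /mf. Qed.

Lemma mono_compr (A B C : Obj K) (g : HOM K B C) (f : HOM K A B) :
  mono (g \oc f) -> mono f.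
Proof. by move=> m X a b e; apply: m; rewrite -!compA e. Qed.

Lemma mono_ker_coker (A B Q : Obj K) (m : HOM K A B) (q : HOM K B Q) :
  mono m -> is_cokernel m q -> is_kernel q m.
Proof.
move=> mm [eq Uq]; case: hab => _ _ _ [hm _].
have [C [g [eg Ug]]] := hm _ _ _ mm.
split => // X h qh.
have [u [eu _]] := Uq _ g eg.
apply: Ug; by rewrite -eu -compA qh comp0r.
Qed.

End Basic.

Section Duals.
Variable K : category.
Hypothesis hab : is_abelian K.
Let hop := abelian_op hab.

Lemma compA' (A B C D : Obj K) (h : HOM K C D) (g : HOM K B C) (f : HOM K A B) :
  h \oc (g \oc f) = h \oc g \oc f.
Proof. exact: compA. Qed.

Lemma epiP (A B : Obj K) (m : HOM K A B) :
  epi m <-> (forall X (h : HOM K B X), h \oc m = 0 -> h = 0).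
Proof. exact: (@monoP (opc K) hop B A m). Qed.

Lemma cokernel_epi (A B : Obj K) (f : HOM K A B) (Q : Obj K) (q : HOM K B Q) :
  is_cokernel f q -> epi q.
Proof. exact: (@kernel_mono (opc K) hop B A f Q q). Qed.

Lemma epi_comp (A B C : Obj K) (g : HOM K B C) (f : HOM K A B) :
  epi g -> epi f -> epi (g \oc f).
Proof. by move=> a b; exact: (@mono_comp (opc K) hop C B A f g b a). Qed.

Lemma epi_compl (A B C : Obj K) (g : HOM K B C) (f : HOM K A B) :
  epi (g \oc f) -> epi g.
Proof. exact: (@mono_compr (opc K) hop C B A f g). Qed.

Lemma epi_coker_ker (A B J : Obj K) (e : HOM K A B) (j : HOM K J A) :
  epi e -> is_kernel e j -> is_cokernel j e.
Proof. exact: (@mono_ker_coker (opc K) hop B A J e j). Qed.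

End Duals.
Section Coimage.
Variable K : category.
Hypothesis hab : is_abelian K.

Lemma ker_ex (A B : Obj K) (f : HOM K A B) :
  exists (Kr : Obj K) (k : HOM K Kr A), is_kernel f k.
Proof. by case: hab => _ _ [_ [h _]] _; apply: h. Qed.
Lemma coker_ex (A B : Obj K) (f : HOM K A B) :
  exists (Q : Obj K) (q : HOM K B Q), is_cokernel f q.
Proof. by case: hab => _ _ [_ [_ h]] _; apply: h. Qed.

Lemma coimage_mono (X L Kw C : Obj K) (w : HOM K X L) (kw : HOM K Kw X)
  (c : HOM K X C) (w' : HOM K C L) :
  is_kernel w kw -> is_cokernel kw c -> w' \oc c = w -> mono w'.
Proof.
move=> [wk Uw] [ck Uc] ew.
have [K' [k' [wk' Uk']]] := ker_ex w'.
have [C' [p [pk' Up]]] := coker_ex k'.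
have [w'' [ew'' _]] := Up _ _ wk'.
have epc : epi (p \oc c).
  apply: (epi_comp hab); first exact: (cokernel_epi hab (conj pk' Up)).
  exact: (cokernel_epi hab (conj ck Uc)).
have [J [j hj]] := ker_ex (p \oc c).
have [[jk Uj]] := (epi_coker_ker hab epc hj, hj).
move=> _.
have wj : w \oc j = 0.
  by rewrite -ew -ew'' -(compA hab) -(compA hab) (compA hab p) (proj1 hj) comp0r.
have [t [et _]] := Uw _ _ wj.
have cj : c \oc j = 0 by rewrite -et (compA hab) ck comp0l.
have [v [ev _]] := Uj _ _ cj.
have vp : v \oc p = idm C.
  apply: (cokernel_epi hab (conj ck Uc)).
  by rewrite -(compA hab) ev comp1l.
have k'0 : k' = 0.
  by rewrite -(comp1l hab k') -vp -(compA hab) pk' comp0r.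
apply/(monoP hab) => Z h wh.
have [u [eu _]] := Uk' _ _ wh.
by rewrite -eu k'0 comp0l.
Qed.

Lemma image_fact (X L : Obj K) (w : HOM K X L) :
  exists (M : Obj K) (e : HOM K X M) (m : HOM K M L),
    [/\ epi e, mono m & m \oc e = w].
Proof.
have [Kw [kw hk]] := ker_ex w.
have [C [c hc]] := coker_ex kw.
have [w' [ew _]] := (proj2 hc) _ _ (proj1 hk).
exists C, c, w'; split => //.
  exact: (cokernel_epi hab hc).
exact: coimage_mono hk hc ew.
Qed.

End Coimage.
Section Alpha.
Variable K : category.
Hypothesis hab : is_abelian K.
Variable R : realType.
Variable alpha : Obj K -> \bar R.
Hypothesis halpha : amplitude alpha.

Lemma alpha_ge0 (A : Obj K) : (0 <= alpha A)%E.
Proof. by case: halpha. Qed.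

Lemma alpha_zero (Z : Obj K) : is_zero_obj Z -> alpha Z = 0%E.
Proof. by case: halpha => _ h _; apply: h. Qed.

Lemma ses_le (A B C : Obj K) (i : HOM K A B) (p : HOM K B C) :
  short_exact i p ->
  [/\ (alpha A <= alpha B)%E, (alpha C <= alpha B)%E & (alpha B <= alpha A + alpha C)%E].
Proof. by case: halpha => _ _ h; apply: h. Qed.

Lemma mono_le (A B : Obj K) (m : HOM K A B) : mono m -> (alpha A <= alpha B)%E.
Proof.
move=> mm; have [Q [q hq]] := coker_ex hab m.
have hk := mono_ker_coker hab mm hq.
by have [] := ses_le (conj hk hq).
Qed.

Lemma coker_epi0 (A B Q : Obj K) (e : HOM K A B) (q : HOM K B Q) :
  epi e -> is_cokernel e q -> alpha Q = 0%E.
Proof.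
move=> ee [qe Uq]; apply: alpha_zero.
have q0 : q = 0 by apply: ee; rewrite qe comp0l.
have id0 : idm Q = 0.
  have e0 : (0 : HOM K B Q) \oc e = 0 by rewrite comp0l.
  have [u [_ hu]] := Uq _ _ e0.
  by rewrite -(hu (idm Q)) ?(hu 0) // ?comp1l ?comp0l.
move=> X; split => h.
  by rewrite -(comp1l hab h) id0 comp0l.
by rewrite -(comp1r hab h) id0 comp0r.
Qed.

Lemma kerG (X L Kw : Obj K) (w : HOM K X L) (kw : HOM K Kw X) :
  is_kernel w kw -> (alpha X <= alpha Kw + alpha L)%E.
Proof.
move=> hk; have [C [c hc]] := coker_ex hab kw.
have hk' := mono_ker_coker hab (kernel_mono hab hk) hc.
have [_ _ h1] := ses_le (conj hk' hc).
have [w' [ew _]] := (proj2 hc) _ _ (proj1 hk).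
have mw' := coimage_mono hab hk hc ew.
apply: (le_trans h1); apply: leeD2l; exact: mono_le mw'.
Qed.

Lemma ker_comp (X Y Z Kc Ka Kb : Obj K) (a : HOM K X Y) (b : HOM K Y Z)
  (k : HOM K Kc X) (ka : HOM K Ka X) (kb : HOM K Kb Y) :
  is_kernel (b \oc a) k -> is_kernel a ka -> is_kernel b kb ->
  (alpha Kc <= alpha Ka + alpha Kb)%E.
Proof.
move=> hk hka hkb.
have e1 : b \oc (a \oc k) = 0 by rewrite (compA hab) (proj1 hk).
have [w [ew _]] := (proj2 hkb) _ _ e1.
have [Kw [kw hkw]] := ker_ex hab w.
apply: (le_trans (kerG hkw)); apply: leeD2r.
have e2 : a \oc (k \oc kw) = 0.
  by rewrite (compA hab) -ew -(compA hab) (proj1 hkw) comp0r.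
have [t [et _]] := (proj2 hka) _ _ e2.
apply: (@mono_le _ _ t); apply: (@mono_compr _ hab _ _ _ ka).
rewrite et; apply: (mono_comp hab); [exact: (kernel_mono hab hk) | exact: (kernel_mono hab hkw)].
Qed.

End Alpha.

Section AlphaDual.
Variable K : category.
Hypothesis hab : is_abelian K.
Variable R : realType.
Variable alpha : Obj K -> \bar R.
Hypothesis halpha : amplitude alpha.
Let hop := abelian_op hab.
Let aop := amp_op halpha.

Lemma epi_le (A B : Obj K) (e : HOM K A B) : epi e -> (alpha B <= alpha A)%E.
Proof. exact: (@mono_le (opc K) hop R alpha aop B A e). Qed.

Lemma coker_comp (X Y Z Qc Qa Qb : Obj K) (a : HOM K X Y) (b : HOM K Y Z)
  (q : HOM K Z Qc) (qa : HOM K Y Qa) (qb : HOM K Z Qb) :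
  is_cokernel (b \oc a) q -> is_cokernel a qa -> is_cokernel b qb ->
  (alpha Qc <= alpha Qa + alpha Qb)%E.
Proof.
move=> h1 h2 h3; rewrite addeC.
exact: (@ker_comp (opc K) hop R alpha aop Z Y X Qc Qb Qa b a q qb qa h1 h3 h2).
Qed.

End AlphaDual.
Definition is_pb (K : category) (C D B P : Obj K) (psi : HOM K C B) (phi : HOM K D B)
  (p : HOM K P C) (p' : HOM K P D) : Prop :=
 [/\ psi \oc p = phi \oc p',
   (forall X (g1 : HOM K X C) (g2 : HOM K X D), psi \oc g1 = phi \oc g2 ->
       exists h, p \oc h = g1 /\ p' \oc h = g2) &
   (forall X (h : HOM K X P), p \oc h = 0 -> p' \oc h = 0 -> h = 0)].

Section Pullback.
Variable K : category.
Hypothesis hab : is_abelian K.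
Local Notation cA := (compA hab).
Local Notation c1l := (comp1l hab).
Local Notation c1r := (comp1r hab).
Local Notation cDl := (compDl hab).
Local Notation cDr := (compDr hab).
Local Notation c0l := (comp0l hab).
Local Notation c0r := (comp0r hab).
Local Notation cNl := (compNl hab).
Local Notation cNr := (compNr hab).
Local Notation cBl := (compBl hab).
Local Notation cBr := (compBr hab).

Lemma pb_sym (C D B P : Obj K) (psi : HOM K C B) (phi : HOM K D B)
  (p : HOM K P C) (p' : HOM K P D) : is_pb psi phi p p' -> is_pb phi psi p' p.
Proof.
case=> e U J; split => //.
- by move=> X g1 g2 eg; have [h [h1 h2]] := U X g2 g1 (esym eg); exists h.
- by move=> X h a b; apply: J.
Qed.

Lemma biprod_ex (A B : Obj K) : exists (P : Obj K) (i1 : HOM K A P) (i2 : HOM K B P)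
          (p1 : HOM K P A) (p2 : HOM K P B), is_biproduct i1 i2 p1 p2.
Proof. by case: hab => _ _ [h _] _; apply: h. Qed.

Lemma bp_facts (A B P X : Obj K) (i1 : HOM K A P) (i2 : HOM K B P)
          (p1 : HOM K P A) (p2 : HOM K P B) (g1 : HOM K X A) (g2 : HOM K X B) :
  is_biproduct i1 i2 p1 p2 ->
  p1 \oc (i1 \oc g1 + i2 \oc g2) = g1 /\ p2 \oc (i1 \oc g1 + i2 \oc g2) = g2.
Proof.
case=> e1 e2 e3 e4 _.
rewrite !cDr !cA e1 e2 e3 e4 !c1l !c0l.
by rewrite addr0 add0r.
Qed.

Lemma bp_split (A B P X : Obj K) (i1 : HOM K A P) (i2 : HOM K B P)
          (p1 : HOM K P A) (p2 : HOM K P B) (g : HOM K X P) :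
  is_biproduct i1 i2 p1 p2 -> g = i1 \oc (p1 \oc g) + i2 \oc (p2 \oc g).
Proof.
case=> _ _ _ _ e5.
by rewrite !cA -cDl e5 c1l.
Qed.

Lemma pb_exists (C D B : Obj K) (psi : HOM K C B) (phi : HOM K D B) :
  exists (P : Obj K) (p : HOM K P C) (p' : HOM K P D), is_pb psi phi p p'.
Proof.
have [S [i1 [i2 [p1 [p2 hb]]]]] := biprod_ex C D.
have [P [k [ek Uk]]] := ker_ex hab (psi \oc p1 - phi \oc p2).
exists P, (p1 \oc k), (p2 \oc k); split.
- by apply/eqP; rewrite -subr_eq0 !cA -cBl ek.
- move=> X g1 g2 eg.
  have [f1 f2] := bp_facts g1 g2 hb.
  have e0 : (psi \oc p1 - phi \oc p2) \oc (i1 \oc g1 + i2 \oc g2) = 0.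
    by rewrite cBl -!cA f1 f2 eg subrr.
  have [h [eh _]] := Uk _ _ e0.
  by exists h; rewrite -!cA eh.
- move=> X h a b.
  apply: (kernel_mono hab (conj ek Uk)); rewrite c0r.
  move: a b; rewrite -!cA => a b.
  by rewrite (bp_split (k \oc h) hb) a b !c0r addr0.
Qed.

Lemma pb_ker (C D B P Kp Kf : Obj K) (psi : HOM K C B) (phi : HOM K D B)
  (p : HOM K P C) (p' : HOM K P D) (kp : HOM K Kp P) (kf : HOM K Kf D)
  (R : realType) (alpha : Obj K -> \bar R) :
  amplitude alpha ->
  is_pb psi phi p p' -> is_kernel p kp -> is_kernel phi kf ->
  (alpha Kp <= alpha Kf)%E.
Proof.
move=> ha [e U J] hkp hkf.
have e1 : phi \oc (p' \oc kp) = 0 by rewrite cA -e -cA (proj1 hkp) c0r.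
have [t [et _]] := (proj2 hkf) _ _ e1.
apply: (mono_le hab ha (m := t)); apply/(monoP hab) => X h th.
apply: (proj1 (monoP hab _) (kernel_mono hab hkp)); apply: J.
  by rewrite cA (proj1 hkp) c0l.
by rewrite cA -et -cA th c0r.
Qed.

End Pullback.
Section PbCoker.
Variable K : category.
Hypothesis hab : is_abelian K.
Local Notation cA := (compA hab).
Local Notation c1l := (comp1l hab).
Local Notation c1r := (comp1r hab).
Local Notation cDl := (compDl hab).
Local Notation cDr := (compDr hab).
Local Notation c0l := (comp0l hab).
Local Notation c0r := (comp0r hab).
Local Notation cNl := (compNl hab).
Local Notation cNr := (compNr hab).
Local Notation cBl := (compBl hab).
Local Notation cBr := (compBr hab).

Lemma pb_coker (C D B P Qp Qf : Obj K) (psi : HOM K C B) (phi : HOM K D B)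
  (p : HOM K P C) (p' : HOM K P D) (qp : HOM K C Qp) (qf : HOM K B Qf)
  (R : realType) (alpha : Obj K -> \bar R) :
  amplitude alpha ->
  is_pb psi phi p p' -> is_cokernel p qp -> is_cokernel phi qf ->
  (alpha Qp <= alpha Qf)%E.
Proof.
move=> ha [e U J] hqp hqf.
have [I [ep [m [eep mm emp]]]] := image_fact hab phi.
have hqm : is_cokernel m qf.
  split.
  - by apply: eep; rewrite -cA emp (proj1 hqf) c0l.
  - by move=> X g gm; apply: (proj2 hqf); rewrite -emp cA gm c0l.
have hkm := mono_ker_coker hab mm hqm.
have [J0 [j hj]] := ker_ex hab (qf \oc psi).
have e1 : qf \oc (psi \oc j) = 0 by rewrite cA (proj1 hj).
have [s [es _]] := (proj2 hkm) _ _ e1.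
have e2 : (qf \oc psi) \oc p = 0 by rewrite -cA e cA (proj1 hqf) c0l.
have [r [er _]] := (proj2 hj) _ _ e2.
have epir : epi r.
  have [S [i1 [i2 [p1 [p2 hb]]]]] := biprod_ex hab J0 D.
  have hb' := hb; case: hb' => b1 b2 b3 b4 b5.
  have [sg esg] : exists sg : HOM K S I, sg = s \oc p1 - ep \oc p2 by eexists.
  have [ka eka] : exists ka : HOM K P S, ka = i1 \oc r + i2 \oc p' by eexists.
  have [f1 f2] := bp_facts hab r p' hb; rewrite -eka in f1 f2.
  have sgi2 : sg \oc i2 = - ep.
    by rewrite esg cBl -!cA b3 b2 c0r c1r sub0r.
  have episg : epi sg.
    apply/(epiP hab) => X y ysg.
    apply: (proj1 (epiP hab _) eep).
    by apply/eqP; rewrite -oppr_eq0 -cNr -sgi2 cA ysg c0l.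
  have sgka : sg \oc ka = 0.
    apply: (proj1 (monoP hab _) mm).
    by rewrite esg cBl -!cA f1 f2 cBr !cA es emp -(cA psi) er e subrr.
  have kamono : mono ka.
    apply/(monoP hab) => X h kh.
    have rh : r \oc h = 0 by rewrite -f1 -cA kh c0r.
    have ph : p' \oc h = 0 by rewrite -f2 -cA kh c0r.
    by apply: J => //; rewrite -er -cA rh c0r.
  have kker : is_kernel sg ka.
    split => // Y g sgg.
    have t : s \oc (p1 \oc g) = ep \oc (p2 \oc g).
      by apply/eqP; rewrite -subr_eq0 !cA -cBl -esg sgg.
    have e3 : psi \oc (j \oc (p1 \oc g)) = phi \oc (p2 \oc g).
      by rewrite cA -es -cA t cA emp.
    have [h [h1 h2]] := U _ _ _ e3.
    have rh : r \oc h = p1 \oc g.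
      by apply: (kernel_mono hab hj); rewrite cA er h1.
    have kah : ka \oc h = g.
      by rewrite [RHS](bp_split hab g hb) -rh -h2 eka cDl -!cA.
    exists h; split => // h' eh'.
    by apply: kamono; rewrite eh'.
  have sgcok := epi_coker_ker hab episg kker.
  apply/(epiP hab) => X x xr.
  have e4 : (x \oc p1) \oc ka = 0 by rewrite -cA f1 xr.
  have [y [ey _]] := (proj2 sgcok) _ _ e4.
  have ye : y \oc ep = 0.
    by apply/eqP; rewrite -oppr_eq0 -cNr -sgi2 cA ey -cA b3 c0r.
  have y0 : y = 0 := proj1 (epiP hab _) eep _ _ ye.
  have xp1 : x \oc p1 = 0 by rewrite -ey y0 c0l.
  by rewrite -(c1r x) -b1 cA xp1 c0l.
have [Qr [qr hqr]] := coker_ex hab r.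
have [Qj [qj hqj]] := coker_ex hab j.
have hqp' : is_cokernel (j \oc r) qp by rewrite er.
have h1 := coker_comp hab ha hqp' hqr hqj.
rewrite (coker_epi0 hab ha epir hqr) add0e in h1.
apply: (le_trans h1).
have [w' [ew' _]] := (proj2 hqj) _ _ (proj1 hj).
exact: (mono_le hab ha (coimage_mono hab hj hqj ew')).
Qed.
End PbCoker.
Section InfLemma.
Variable R : realType.
Local Open Scope ereal_scope.

Lemma inf_ge0 (S : set \bar R) : (forall x, S x -> 0 <= x) -> 0 <= ereal_inf S.
Proof. by move=> h; apply: le_ereal_inf_tmp => x /h. Qed.

Lemma inf_add (S1 S2 : set \bar R) (z : \bar R) :
  (forall x, S1 x -> 0 <= x) -> (forall y, S2 y -> 0 <= y) ->
  (forall x y, S1 x -> S2 y -> z <= x + y) ->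
  z <= ereal_inf S1 + ereal_inf S2.
Proof.
move=> h1 h2 H.
have i1 := inf_ge0 h1; have i2 := inf_ge0 h2.
case ea : (ereal_inf S1) i1 => [a'| |] i1 //; last first.
  by rewrite addye ?leey //; case: (ereal_inf S2) i2.
case eb : (ereal_inf S2) i2 => [b'| |] i2 //; last first.
  by rewrite addey ?leey.
apply/lee_addgt0Pr => eps heps.
have heps2 : (0 < eps / 2)%R by rewrite divr_gt0.
have [x Sx hx] : exists2 x, S1 x & x < (a' + eps / 2)%:E.
  by apply: ereal_inf_lt; rewrite ea lte_fin ltrDl.
have [y Sy hy] : exists2 y, S2 y & y < (b' + eps / 2)%:E.
  by apply: ereal_inf_lt; rewrite eb lte_fin ltrDl.
apply: (le_trans (H x y Sx Sy)); apply: (le_trans (leeD (ltW hx) (ltW hy))).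
by rewrite -!EFinD lee_fin addrACA -splitr.
Qed.
End InfLemma.
Section Main.
Variable K : category.
Hypothesis hab : is_abelian K.
Variable R : realType.
Variable alpha : Obj K -> \bar R.
Hypothesis halpha : amplitude alpha.
Variable f : \bar R -> \bar R -> \bar R -> \bar R -> \bar R.
Hypothesis hf : cost_function f.
Local Open Scope ereal_scope.

Lemma nn4 (A B C D : Obj K) : nonneg4 (alpha A) (alpha B) (alpha C) (alpha D).
Proof. by split; apply: (alpha_ge0 halpha). Qed.

Lemma fsym x1 x2 x3 x4 : nonneg4 x1 x2 x3 x4 -> f x1 x2 x3 x4 = f x3 x4 x1 x2.
Proof.
case: hf => _ _ _ _ hsym nn.
have [-> _] := hsym _ _ _ _ nn.
have [a b c d] := nn.
by have [_ ->] := hsym x3 x2 x1 x4 (And4 c b a d).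
Qed.

Lemma cost_ge0 (A B : Obj K) x : cost_set alpha f A B x -> 0 <= x.
Proof.
case: hf => h0 _ _ _ _.
by move=> [C [[phi [psi H]]|[phi [psi H]]]];
  case: H => K1 [k1 [Q1 [q1 [K2 [k2 [Q2 [q2 [_ _ _ _ ->]]]]]]]]; apply: h0; apply: nn4.
Qed.

Lemma cost_sym (A B : Obj K) x : cost_set alpha f A B x -> cost_set alpha f B A x.
Proof.
move=> [C [[phi [psi H]]|[phi [psi H]]]]; exists C; [left|right]; exists psi, phi;
  case: H => K1 [k1 [Q1 [q1 [K2 [k2 [Q2 [q2 [h1 h2 h3 h4 ->]]]]]]]];
  exists K2, k2, Q2, q2, K1, k1, Q1, q1; split => //; apply: fsym; apply: nn4.
Qed.

Lemma to_span (A B : Obj K) x : cost_set alpha f A B x ->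
  exists (C : Obj K) (phi : HOM K C A) (psi : HOM K C B) y,
    has_cost alpha f phi psi y /\ y <= x.
Proof.
move=> [C [[phi [psi H]]|[phi [psi H]]]].
  by exists C, phi, psi, x; split.
case: H => K1 [k1 [Q1 [q1 [K2 [k2 [Q2 [q2 [h1 h2 h3 h4 ->]]]]]]]].
have [P [p [p' hpb]]] := pb_exists hab phi psi.
have hpb' := pb_sym hpb.
have [Ka [ka hka]] := ker_ex hab p.
have [Qa [qa hqa]] := coker_ex hab p.
have [Kb [kb hkb]] := ker_ex hab p'.
have [Qb [qb hqb]] := coker_ex hab p'.
exists P, p, p', (f (alpha Ka) (alpha Qa) (alpha Kb) (alpha Qb)); split.
  by exists Ka, ka, Qa, qa, Kb, kb, Qb, qb; split.
rewrite (fsym (nn4 K1 Q1 K2 Q2)).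
case: hf => _ hm _ _ _; apply: hm; first exact: nn4.
- exact: (pb_ker hab halpha hpb hka h3).
- exact: (pb_coker hab halpha hpb hqa h4).
- exact: (pb_ker hab halpha hpb' hkb h1).
- exact: (pb_coker hab halpha hpb' hqb h2).
Qed.

Lemma compose (A B E C D : Obj K) (phi1 : HOM K C A) (psi1 : HOM K C B)
  (phi2 : HOM K D B) (psi2 : HOM K D E) x y :
  has_cost alpha f phi1 psi1 x -> has_cost alpha f phi2 psi2 y ->
  exists z, cost_set alpha f A E z /\ z <= x + y.
Proof.
case=> K1 [k1 [Q1 [q1 [K2 [k2 [Q2 [q2 [h1 h2 h3 h4 ->]]]]]]]].
case=> K3 [k3 [Q3 [q3 [K4 [k4 [Q4 [q4 [h5 h6 h7 h8 ->]]]]]]]].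
have [P [p [p' hpb]]] := pb_exists hab psi1 phi2.
have hpb' := pb_sym hpb.
have [Ka [ka hka]] := ker_ex hab p.
have [Qa [qa hqa]] := coker_ex hab p.
have [Kb [kb hkb]] := ker_ex hab p'.
have [Qb [qb hqb]] := coker_ex hab p'.
have [Kc [kc hkc]] := ker_ex hab (phi1 \oc p).
have [Qc [qc hqc]] := coker_ex hab (phi1 \oc p).
have [Kd [kd hkd]] := ker_ex hab (psi2 \oc p').
have [Qd [qd hqd]] := coker_ex hab (psi2 \oc p').
exists (f (alpha Kc) (alpha Qc) (alpha Kd) (alpha Qd)); split.
  exists P; left; exists (phi1 \oc p), (psi2 \oc p').
  by exists Kc, kc, Qc, qc, Kd, kd, Qd, qd; split.
case: hf => _ hm hs _ _.
apply: le_trans (hs _ _ _ _ _ _ _ _ (nn4 K1 Q1 K2 Q2) (nn4 K3 Q3 K4 Q4)).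
apply: hm; first exact: nn4.
- apply: (le_trans (ker_comp hab halpha hkc hka h1)); rewrite addeC.
  exact: leeD2l (pb_ker hab halpha hpb hka h5).
- apply: (le_trans (coker_comp hab halpha hqc hqa h2)); rewrite addeC.
  exact: leeD2l (pb_coker hab halpha hpb hqa h6).
- apply: (le_trans (ker_comp hab halpha hkd hkb h7)).
  exact: leeD2r (pb_ker hab halpha hpb' hkb h3).
- apply: (le_trans (coker_comp hab halpha hqd hqb h8)).
  exact: leeD2r (pb_coker hab halpha hpb' hqb h4).
Qed.

End Main.
Lemma zero_cost (K : category) (hab : is_abelian K) (R : realType)
  (alpha : Obj K -> \bar R) (halpha : amplitude alpha)
  (f : \bar R -> \bar R -> \bar R -> \bar R -> \bar R) (hf : cost_function f)
  (A : Obj K) : cost_set alpha f A A 0%E.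
Proof.
have [_ [Z hZ] _ _] := hab.
have hk : is_kernel (idm A) (0 : HOM K Z A).
  split; first by rewrite (comp0r hab).
  move=> X g; rewrite (comp1l hab) => ->; exists 0; split; first by rewrite (comp0l hab).
  by move=> u _; case: (hZ X) => a _; rewrite (a u).
have hc : is_cokernel (idm A) (0 : HOM K A Z).
  split; first by rewrite (comp0l hab).
  move=> X g; rewrite (comp1r hab) => ->; exists 0; split; first by rewrite (comp0r hab).
  by move=> u _; case: (hZ X) => _ a; rewrite (a u).
exists A; left; exists (idm A), (idm A), Z, 0, Z, 0, Z, 0, Z, 0.
split => //.
by rewrite (alpha_zero halpha hZ); case: hf => _ _ _ ->.
Qed.

Theorem mainTheorem4 (R : realType) (K : category) (habel : is_abelian K)
    (alpha : Obj K -> \bar R) (halpha : amplitude alpha)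
    (f : \bar R -> \bar R -> \bar R -> \bar R -> \bar R) (hf : cost_function f) :
  ext_pseudometric (dist alpha f).
Proof.
split.
- by move=> A B; apply: inf_ge0 => x; apply: cost_ge0.
- move=> A; apply/eqP; rewrite eq_le; apply/andP; split.
    exact: ereal_inf_lbound (zero_cost habel halpha hf A).
  by apply: inf_ge0 => x; apply: cost_ge0.
- move=> A B; rewrite /dist; congr ereal_inf.
  by apply/seteqP; split => x; apply: cost_sym.
- move=> A B C; rewrite /dist.
  apply: inf_add; [by move=> x; apply: cost_ge0 | by move=> x; apply: cost_ge0 |].
  move=> x y hx hy.
  have [D [phi1 [psi1 [x' [hx' lx]]]]] := to_span habel halpha hf hx.
  have [E [phi2 [psi2 [y' [hy' ly]]]]] := to_span habel halpha hf hy.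
  have [z [hz lz]] := compose habel halpha hf hx' hy'.
  apply: le_trans (ereal_inf_lbound hz) _.
  exact: le_trans lz (leeD lx ly).
Qed.
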